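(* Let $\mathcal{S}=\{(\bm{x}_i,y_i): i\in[m]\}$ be any sample with $\bm{x}_i\in\mathbb{R}^d$ and $y_i\in\{-1,1\}$, and let $h(\bm{x})=\langle\bm{\theta},\bm{x}\rangle$ be any linear hypothesis ($\bm{\theta}\in\mathbb{R}^d$). Let $l:\mathbb{R}\to\mathbb{R}$ be a loss such that $l_o(x):=(l(x)-l(-x))/2$ is linear. Then $$R_{\mathcal{S},l}(h)=\frac{1}{2}\cdot\frac{1}{m}\sum_{i=1}^m\sum_{\sigma\in\{-1,1\}} l(\sigma h(\bm{x}_i)) + l_o\big(h(\bm{\mu}_{\mathcal{S}})\big).$$
   Context: The empirical $l$-risk is $R_{\mathcal{S},l}(h)=\frac{1}{m}\sum_{i=1}^m l(y_i h(\bm{x}_i))$. The mean operator of $\mathcal{S}$ is $\bm{\mu}_{\mathcal{S}}=\frac{1}{m}\sum_{i=1}^m y_i\bm{x}_i$. *)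

(* Defs.v *)
From mathcomp Require Import all_boot all_order all_algebra.
Set Implicit Arguments. Unset Strict Implicit. Unset Printing Implicit Defensive.
Import Order.TTheory GRing.Theory Num.Theory.
Local Open Scope ring_scope.

Definition inner (R : realFieldType) (d : nat) (u v : 'rV[R]_d) : R :=
  \sum_(j < d) u 0 j * v 0 j.

Definition linh (R : realFieldType) (d : nat) (theta : 'rV[R]_d) (x : 'rV[R]_d) : R :=
  inner theta x.

Definition emp_risk (R : realFieldType) (d m : nat) (x : 'I_m -> 'rV[R]_d)
  (y : 'I_m -> R) (l : R -> R) (h : 'rV[R]_d -> R) : R :=
  (m%:R)^-1 * \sum_(i < m) l (y i * h (x i)).

Definition mean_op (R : realFieldType) (d m : nat) (x : 'I_m -> 'rV[R]_d)
  (y : 'I_m -> R) : 'rV[R]_d :=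
  (m%:R)^-1 *: \sum_(i < m) (y i *: x i).

Definition odd_part (R : realFieldType) (l : R -> R) (z : R) : R :=
  (l z - l (- z)) / 2.

Definition is_linear_fun (R : realFieldType) (f : R -> R) : Prop :=
  exists a : R, forall z, f z = a * z.

(* Main.v *)
Require Import Defs.
From mathcomp Require Import all_boot all_order all_algebra.
From mathcomp Require Import ring.
Import Order.TTheory GRing.Theory Num.Theory.
Local Open Scope ring_scope.

Lemma inner_mean (R : realFieldType) (d m : nat)
  (x : 'I_m -> 'rV[R]_d) (y : 'I_m -> R) (theta : 'rV[R]_d) :
  linh theta (mean_op x y) = (m%:R)^-1 * \sum_(i < m) y i * linh theta (x i).
Proof.
rewrite /linh /inner /mean_op.
under eq_bigr => j _ do rewrite mxE summxE mulrCA.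
rewrite -big_distrr /=; congr (_ * _).
under eq_bigr => j _ do rewrite big_distrr.
rewrite exchange_big /=; apply: eq_bigr => i _.
rewrite big_distrr /=; apply: eq_bigr => j _.
rewrite mxE; ring.
Qed.

Theorem theorem3 (R : realFieldType) (d m : nat)
  (x : 'I_m -> 'rV[R]_d) (y : 'I_m -> R)
  (hy : forall i, y i = 1 \/ y i = -1)
  (theta : 'rV[R]_d) (l : R -> R)
  (hl : is_linear_fun (odd_part l)) :
  emp_risk x y l (linh theta) =
  2^-1 * ((m%:R)^-1 * \sum_(i < m) \sum_(sigma <- [:: 1; -1]) l (sigma * linh theta (x i)))
  + odd_part l (linh theta (mean_op x y)).
Proof.
case: hl => a ha.
rewrite ha inner_mean /emp_risk.
have key : forall i, l (y i * linh theta (x i)) =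
  2^-1 * \sum_(sigma <- [:: 1; -1]) l (sigma * linh theta (x i))
  + a * (y i * linh theta (x i)).
  move=> i; rewrite !big_cons big_nil addr0 mul1r mulN1r.
  have := ha (linh theta (x i)); rewrite /odd_part => e.
  have e2 : l (linh theta (x i)) - l (- linh theta (x i)) = 2 * (a * linh theta (x i)).
    by rewrite -e mulrC divfK // pnatr_eq0.
  case: (hy i) => ->.
    rewrite mul1r.
    have -> : l (linh theta (x i)) = l (- linh theta (x i)) + 2 * (a * linh theta (x i)).
      by rewrite -e2; ring.
    field; rewrite ?pnatr_eq0 // ?oppr_eq0 ?pnatr_eq0 //.
  rewrite mulN1r.
  have -> : l (linh theta (x i)) = l (- linh theta (x i)) + 2 * (a * linh theta (x i)).
    by rewrite -e2; ring.
  field; rewrite ?pnatr_eq0 // ?oppr_eq0 ?pnatr_eq0 //.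
under eq_bigr => i _ do rewrite key.
rewrite big_split /= -!big_distrr /=; ring.
Qed.
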